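(* Let $\epsilon\in(0,1)$, $d\ge1$, and let $f$ be the binary-tree function of depth $d$ on $n=2^{d+1}-2$ variables, with unit costs and $p_i=\frac{1+\epsilon}{2}$ for all $i$. Then $$\mathsf{OPT}_{\mathcal A}(f,c,p)\le 2\sum_{i=0}^{d}(1+\epsilon)^i.$$
   Context: Stochastic Boolean Function Evaluation setup: the input $x\in\{0,1\}^n$ has independent coordinates with $\Pr(x_i=1)=p_i$; testing $x_i$ costs $c_i$ (here $c_i=1$). A strategy tests variables sequentially until $f(x)$ is determined (i.e. $f(x')=f(x)$ for all $x'$ agreeing with $x$ on tested coordinates); an adaptive strategy may choose each next test based on previous outcomes. $\mathsf{OPT}_{\mathcal A}(f,c,p)$ is the minimum expected total test cost over adaptive strategies. Binary-tree function of depth $d$: in the complete binary tree of depth $d$ (root at depth $0$, $2^d$ leaves), the $n=2^{d+1}-2$ edges are numbered $1,\dots,n$ and variable $x_i$ is associated with edge $i$; a leaf is alive if $x_i=1$ for every edge on its root-to-leaf path, and $f(x)=1$ iff some leaf is alive. *)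

(* Defs.v *)
From HB Require Import structures.
From mathcomp Require Import all_boot all_order all_algebra.
From mathcomp Require Import classical_sets reals.
Set Implicit Arguments. Unset Strict Implicit. Unset Printing Implicit Defensive.
Import Order.TTheory GRing.Theory Num.Theory.
Local Open Scope classical_set_scope.
Local Open Scope ring_scope.

Definition input (n : nat) := {ffun 'I_n -> bool}.

Inductive strategy (n : nat) : Type :=
| Stop : strategy n
| Test : 'I_n -> strategy n -> strategy n -> strategy n.
Arguments Stop {n}.

Fixpoint tested (n : nat) (T : strategy n) (x : input n) : seq 'I_n :=
  match T with
  | Stop => [::]
  | Test i T0 T1 => i :: tested (if x i then T1 else T0) x
  end.

Definition determined (n : nat) (f : input n -> bool) (x : input n)
  (S : seq 'I_n) : Prop :=
  forall y : input n, (forall i, i \in S -> y i = x i) -> f y = f x.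

Definition valid_strategy (n : nat) (f : input n -> bool) (T : strategy n) :=
  forall x : input n, determined f x (tested T x).

Definition prob_input {R : realType} (n : nat) (p : 'I_n -> R) (x : input n) : R :=
  \prod_(i < n) (if x i then p i else 1 - p i).

Definition expected_cost {R : realType} (n : nat) (c p : 'I_n -> R)
  (T : strategy n) : R :=
  \sum_(x : input n) prob_input p x * \sum_(i <- tested T x) c i.

Definition OPT_A {R : realType} (n : nat) (f : input n -> bool)
  (c p : 'I_n -> R) : R :=
  inf [set r : R | exists2 T : strategy n, valid_strategy f T &
                                           r = expected_cost c p T].

Definition bt_n (d : nat) : nat := (2 ^ d.+1 - 2)%N.

(** Nodes of the complete binary tree are numbered in heap order 1..2^(d+1)-1
    (root 1, children of v are 2v and 2v+1); the edge entering node v >= 2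
    has (0-based) index v - 2.  Leaves are nodes 2^d + l, l < 2^d.  The
    ancestor at depth j of leaf l is (2^d + l) / 2^(d-j). *)
Definition bt_edge (d : nat) (l j : nat) : nat :=
  ((2 ^ d + l) %/ 2 ^ (d - j) - 2)%N.

(** Value of x at index k (false if out of range; never happens here). *)
Definition xat (n : nat) (x : input n) (k : nat) : bool :=
  oapp x false (insub k : option 'I_n).

Definition leaf_alive (d : nat) (x : input (bt_n d)) (l : 'I_(2 ^ d)) : bool :=
  [forall j : 'I_d, xat x (bt_edge d l j.+1)].

Definition binary_tree_fun (d : nat) (x : input (bt_n d)) : bool :=
  [exists l : 'I_(2 ^ d), leaf_alive x l].

(* Main.v *)
Require Import Defs.
From HB Require Import structures.
From mathcomp Require Import all_boot all_order all_algebra.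
From mathcomp Require Import classical_sets reals.
From mathcomp Require Import zify ring lra.
Import Order.TTheory GRing.Theory Num.Theory.
Set Implicit Arguments. Unset Strict Implicit. Unset Printing Implicit Defensive.

Section Strat.
Variable n : nat.

Definition testk (k : nat) (T0 T1 : strategy n) : strategy n :=
  match (insub k : option 'I_n) with Some i => Test i T0 T1 | None => T0 end.

Fixpoint evals (v k : nat) (Tt Tf : strategy n) : strategy n :=
  match k with
  | 0 => Tt
  | k'.+1 =>
    let R := testk (2 * v).+1.-2 Tf (evals (2 * v).+1 k' Tt Tf) in
    testk (2 * v).-2 R (evals (2 * v) k' Tt R)
  end.

Fixpoint Al (v k : nat) (x : input n) : bool :=
  match k with
  | 0 => true
  | k'.+1 => (xat x (2 * v).-2 && Al (2 * v) k' x)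
             || (xat x (2 * v).+1.-2 && Al (2 * v).+1 k' x)
  end.

Lemma testkP k T0 T1 (x : input n) : exists s,
  [/\ size s <= 1, tested (testk k T0 T1) x = s ++ tested (if xat x k then T1 else T0) x
    & forall y : input n, (forall i, i \in s -> y i = x i) -> xat y k = xat x k].
Proof.
rewrite /testk /xat; case: insubP => [i _ _|_] /=.
  exists [:: i]; split => // y Hy; apply: Hy; exact: mem_head.
by exists [::].
Qed.

Lemma tested_agree (T : strategy n) (x y : input n) :
  (forall i, i \in tested T x -> y i = x i) -> tested T y = tested T x.
Proof.
elim: T => [|i T0 IH0 T1 IH1] //= H.
have Hi : y i = x i by apply: H; exact: mem_head.
rewrite Hi; congr (_ :: _); case: (x i) in H *.
  by apply: IH1 => j Hj; apply: H; rewrite inE Hj orbT.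
by apply: IH0 => j Hj; apply: H; rewrite inE Hj orbT.
Qed.

Lemma evals_suffix k v Tt Tf (x : input n) : exists S,
  tested (evals v k Tt Tf) x = S ++ tested (if Al v k x then Tt else Tf) x.
Proof.
elim: k v Tt Tf => [|k IH] v Tt Tf /=; first by exists [::].
set R := testk _ Tf _.
have HR : exists S, tested R x = S ++ tested (if xat x (2 * v).+1.-2 && Al (2 * v).+1 k x then Tt else Tf) x.
  have [s [_ -> _]] := testkP (2 * v).+1.-2 Tf (evals (2 * v).+1 k Tt Tf) x.
  case: (xat x _) => /=; last by exists s.
  have [S ->] := IH (2 * v).+1 Tt Tf; by exists (s ++ S); rewrite catA.
have [s [_ -> _]] := testkP (2 * v).-2 R (evals (2 * v) k Tt R) x.
case: (xat x (2 * v).-2) => /=; last first.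
  by have [S ->] := HR; exists (s ++ S); rewrite catA.
have [S ->] := IH (2 * v) Tt R.
case: (Al (2 * v) k x) => /=; first by exists (s ++ S); rewrite catA.
by have [S' ->] := HR; exists (s ++ S ++ S'); rewrite !catA.
Qed.

Lemma evals_det k v Tt Tf (x y : input n) :
  (forall i, i \in tested (evals v k Tt Tf) x -> y i = x i) -> Al v k y = Al v k x.
Proof.
elim: k v Tt Tf => [|k IH] v Tt Tf //=.
set R := testk _ Tf _ => H.
have HR : (forall i, i \in tested R x -> y i = x i) ->
   (xat y (2 * v).+1.-2 && Al (2 * v).+1 k y) = (xat x (2 * v).+1.-2 && Al (2 * v).+1 k x).
  move=> HH.
  have [s [_ E Hs]] := testkP (2 * v).+1.-2 Tf (evals (2 * v).+1 k Tt Tf) x.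
  rewrite E in HH.
  rewrite Hs; last by move=> i Hi; apply: HH; rewrite mem_cat Hi.
  case: (xat x _) HH => //= HH.
  by rewrite (IH (2 * v).+1 Tt Tf) // => i Hi; apply: HH; rewrite mem_cat Hi orbT.
have [s [_ E Hs]] := testkP (2 * v).-2 R (evals (2 * v) k Tt R) x.
rewrite E in H.
rewrite Hs; last by move=> i Hi; apply: H; rewrite mem_cat Hi.
case Ha: (xat x _) H => /= H; last first.
  by rewrite HR // => i Hi; apply: H; rewrite mem_cat Hi orbT.
have H2 : forall i, i \in tested (evals (2 * v) k Tt R) x -> y i = x i.
  by move=> i Hi; apply: H; rewrite mem_cat Hi orbT.
rewrite (IH _ _ _ H2).
case HA: (Al (2 * v) k x) => //=.
have [S ES] := evals_suffix k (2 * v) Tt R x.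
rewrite ES HA in H2.
by rewrite HR // => i Hi; apply: H2; rewrite mem_cat Hi orbT.
Qed.

Fixpoint Cn (v k : nat) (x : input n) : nat :=
  match k with
  | 0 => 0
  | k'.+1 => 2 + xat x (2 * v).-2 * Cn (2 * v) k' x
              + xat x (2 * v).+1.-2 * Cn (2 * v).+1 k' x
  end.

Lemma evals_size k v Tt Tf (x : input n) :
  size (tested (evals v k Tt Tf) x) <=
    Cn v k x + maxn (size (tested Tt x)) (size (tested Tf x)).
Proof.
elim: k v Tt Tf => [|k IH] v Tt Tf /=; first by rewrite leq_maxl.
set R := testk _ Tf _.
have HR : size (tested R x) <= 1 + xat x (2 * v).+1.-2 * Cn (2 * v).+1 k x
     + maxn (size (tested Tt x)) (size (tested Tf x)).
  have [s [Hs -> _]] := testkP (2 * v).+1.-2 Tf (evals (2 * v).+1 k Tt Tf) x.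
  have := IH (2 * v).+1 Tt Tf; rewrite size_cat.
  case: (xat x _) => /=; lia.
have [s [Hs -> _]] := testkP (2 * v).-2 R (evals (2 * v) k Tt R) x.
have := IH (2 * v) Tt R; rewrite size_cat.
move: HR; case: (xat x _) => /=; lia.
Qed.

Lemma xat_agree (x y : input n) m :
  (forall i : 'I_n, val i = m -> y i = x i) -> xat y m = xat x m.
Proof. by rewrite /xat; case: insubP => [i _ Hi H|] //=; rewrite H. Qed.

Lemma Cn_indep k w (x y : input n) :
  (forall i : 'I_n, (2 * w).-2 <= val i -> y i = x i) -> Cn w k y = Cn w k x.
Proof.
elim: k w => [|k IH] w H //=.
rewrite (@xat_agree x y ((2 * w).-2)); last by move=> i Hi; apply: H; lia.
rewrite (@xat_agree x y ((2 * w).+1.-2)); last by move=> i Hi; apply: H; lia.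
by rewrite !IH // => i Hi; apply: H; lia.
Qed.

End Strat.

Definition Gl n (v k : nat) (x : input n) : bool :=
  [exists l : 'I_(2 ^ k), [forall j : 'I_k, xat x ((v * 2 ^ k + l) %/ 2 ^ (k - j.+1) - 2)]].

Lemma numer_eq v k b l' : (v * 2 ^ k.+1 + (b * 2 ^ k + l') = (2 * v + b) * 2 ^ k + l')%N.
Proof. rewrite expnS; ring. Qed.

Lemma div_top v b k l' : (l' < 2 ^ k)%N -> (((2 * v + b) * 2 ^ k + l') %/ 2 ^ k = 2 * v + b)%N.
Proof. move=> H; rewrite divnMDl ?expn_gt0 // divn_small // addn0 //. Qed.

Lemma Gl_Al n k v (x : input n) : Gl v k x = Al v k x.
Proof.
elim: k v => [|k IH] v.
  rewrite /Gl /=.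
  apply/existsP; exists (Ordinal (isT : (0 < 2 ^ 0)%N)); apply/forallP => -[m i] //.
have key : forall b, (b < 2)%N ->
   (xat x (2 * v + b).-2 && Gl (2 * v + b) k x) =
   [exists l : 'I_(2 ^ k), [forall j : 'I_k.+1,
       xat x (((2 * v + b) * 2 ^ k + l) %/ 2 ^ (k.+1 - j.+1) - 2)]].
  move=> b Hb; apply/idP/idP.
    case/andP=> Hx /existsP [l /forallP Hl]; apply/existsP; exists l.
    apply/forallP => -[[|j] Hj].
      by rewrite subSS subn0 div_top // subn2.
    exact: (Hl (Ordinal (Hj : (j < k)%N))).
  case/existsP => l /forallP Hl; apply/andP; split.
    by have := Hl ord0; rewrite subSS subn0 div_top // subn2.
  apply/existsP; exists l; apply/forallP => -[j Hj].
  exact: (Hl (Ordinal (Hj : (j.+1 < k.+1)%N))).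
have E : Al v k.+1 x = [|| xat x (2 * v + 0).-2 && Gl (2 * v + 0) k x
                        | xat x (2 * v + 1).-2 && Gl (2 * v + 1) k x].
  by rewrite /= !IH addn0 addn1.
rewrite E (key 0%N) // (key 1%N) //.
apply/idP/idP.
  case/existsP => l /forallP Hl.
  have Hb : (l %/ 2 ^ k < 2)%N by rewrite ltn_divLR ?expn_gt0 // -expnS.
  have Hl' : (l %% 2 ^ k < 2 ^ k)%N by rewrite ltn_mod expn_gt0.
  have Ed : (v * 2 ^ k.+1 + l = (2 * v + l %/ 2 ^ k) * 2 ^ k + l %% 2 ^ k)%N.
    by rewrite -numer_eq -divn_eq.
  case: (l %/ 2 ^ k) Hb Ed => [|[|]] // _ Ed; apply/orP; [left|right];
  apply/existsP; exists (Ordinal Hl'); apply/forallP => j; have := Hl j;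
  by rewrite Ed.
have H : forall b, (b < 2)%N -> [exists l : 'I_(2 ^ k), [forall j : 'I_k.+1,
       xat x (((2 * v + b) * 2 ^ k + l) %/ 2 ^ (k.+1 - j.+1) - 2)]] ->
     [exists l : 'I_(2 ^ k.+1), [forall j : 'I_k.+1,
       xat x ((v * 2 ^ k.+1 + l) %/ 2 ^ (k.+1 - j.+1) - 2)]].
  move=> b Hb /existsP [l /forallP Hl].
  have Hlt : (b * 2 ^ k + l < 2 ^ k.+1)%N.
    rewrite expnS; have := ltn_ord l; nia.
  apply/existsP; exists (Ordinal Hlt); apply/forallP => j; rewrite /= numer_eq; exact: Hl.
by case/orP; apply: H.
Qed.

Lemma btf_Gl d (x : input (bt_n d)) : binary_tree_fun x = Gl 1 d x.
Proof.
rewrite /binary_tree_fun /Gl; apply: eq_existsb => l; apply: eq_forallb => j.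
by rewrite /bt_edge mul1n.
Qed.

Local Open Scope ring_scope.

Section Prob.
Variables (R : realType) (n : nat) (p : 'I_n -> R).

Lemma sum_prob : \sum_(x : input n) prob_input p x = 1.
Proof.
rewrite /prob_input.
rewrite -(bigA_distr_bigA (fun (i : 'I_n) (b : bool) => if b then p i else 1 - p i)).
rewrite big1 // => i _; rewrite big_bool /=; ring.
Qed.

Lemma prob_ge0 x : (forall i, 0 <= p i <= 1) -> 0 <= prob_input p x.
Proof.
move=> H; rewrite /prob_input; apply: prodr_ge0 => i _.
have /andP[h1 h2] := H i; case: (x i); lra.
Qed.

Definition flip (i : 'I_n) (x : input n) : input n :=
  [ffun j => if j == i then ~~ x j else x j].

Lemma flipK i : involutive (flip i).
Proof.
move=> x; apply/ffunP => j; rewrite !ffunE.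
by case: eqP => // ->; rewrite negbK.
Qed.

Lemma key_indep (i : 'I_n) (g : input n -> R) :
  (forall x, g (flip i x) = g x) ->
  \sum_(x : input n) prob_input p x * ((x i)%:R * g x) = p i * \sum_(x : input n) prob_input p x * g x.
Proof.
move=> Hg.
pose Q (x : input n) := \prod_(j < n | j != i) (if x j then p j else 1 - p j).
have Hp : forall x : input n, prob_input p x = (if x i then p i else 1 - p i) * Q x.
  by move=> x; rewrite /prob_input (bigD1 i).
have HQ : forall x : input n, Q (flip i x) = Q x.
  move=> x; apply: eq_bigr => j Hj; by rewrite ffunE (negbTE Hj).
pose h x := Q x * g x.
have S10 : \sum_(x : input n) (x i)%:R * h x = \sum_(x : input n) (~~ x i)%:R * h x.
  rewrite (reindex_inj (inv_inj (flipK i))) /=.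
  by apply: eq_bigr => x _; rewrite /h HQ Hg ffunE eqxx.
have -> : \sum_(x : input n) prob_input p x * ((x i)%:R * g x) = p i * \sum_(x : input n) (x i)%:R * h x.
  rewrite big_distrr; apply: eq_bigr => x _; rewrite Hp /h; case: (x i) => /=; ring.
have -> : \sum_(x : input n) prob_input p x * g x =
    \sum_(x : input n) (p i * ((x i)%:R * h x) + (1 - p i) * ((~~ x i)%:R * h x)).
  apply: eq_bigr => x _; rewrite Hp /h; case: (x i) => /=; ring.
rewrite big_split /= -!big_distrr /= -S10; congr (_ * _); ring.
Qed.

End Prob.

Lemma key_xat (R : realType) n (q : R) (m : nat) (g : input n -> R) :
  0 <= q <= 1 -> (forall x, 0 <= g x) ->
  (forall x y : input n, (forall i : 'I_n, val i != m -> y i = x i) -> g y = g x) ->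
  \sum_(x : input n) prob_input (fun _ => q) x * ((xat x m)%:R * g x) <=
     q * \sum_(x : input n) prob_input (fun _ => q) x * g x.
Proof.
move=> Hq Hg0 Hg; rewrite /xat; case: insubP => [i _ Hi|_] /=.
  rewrite key_indep // => x; apply: Hg => j Hj; rewrite ffunE.
  by case: eqP => // E; rewrite E Hi eqxx in Hj.
rewrite big1; last by move=> x _; rewrite mul0r mulr0.
have Hq0 : 0 <= q by case/andP: Hq.
apply: mulr_ge0 => //; apply: sumr_ge0 => x _.
apply: mulr_ge0 => //; exact: prob_ge0.
Qed.

Lemma Cn_bound (R : realType) (eps : R) n k v : 0 < eps < 1 -> (1 <= v)%N ->
  \sum_(x : input n) prob_input (fun _ => (1 + eps) / 2) x * (Cn v k x)%:R
    <= 2 * \sum_(i < k) (1 + eps) ^+ i.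
Proof.
move=> He; set q := (1 + eps) / 2.
have Hq : 0 <= q <= 1 by apply/andP; split; rewrite /q; case/andP: He => *; lra.
elim: k v => [|k IH] v Hv.
  by rewrite big_ord0 mulr0 big1 // => x _; rewrite mulr0.
have Hind : forall w m, (m < (2 * w).-2)%N -> forall x y : input n,
    (forall i : 'I_n, val i != m -> y i = x i) -> (Cn w k y)%:R = (Cn w k x)%:R :> R.
  move=> w m Hm x y H; rewrite (@Cn_indep n k w x y) // => i Hi; apply: H; lia.
have Cge0 : forall w (x : input n), 0 <= (Cn w k x)%:R :> R by move=> w x; apply: ler0n.
have E : forall x : input n, (Cn v k.+1 x)%:R =
   (2 : R) + (xat x (2 * v).-2)%:R * (Cn (2 * v) k x)%:R
     + (xat x (2 * v).+1.-2)%:R * (Cn (2 * v).+1 k x)%:R.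
  by move=> x; rewrite /= !natrD !natrM.
under eq_bigr => x _ do rewrite E !mulrDr.
rewrite !big_split /= -big_distrl /= sum_prob mul1r.
have H1 := @key_xat R n q (2 * v).-2 (fun x => (Cn (2 * v) k x)%:R) Hq (Cge0 (2 * v)) (Hind (2 * v) (2 * v).-2 ltac:(lia)).
have H2 := @key_xat R n q (2 * v).+1.-2 (fun x => (Cn (2 * v).+1 k x)%:R) Hq (Cge0 (2 * v).+1) (Hind (2 * v).+1 (2 * v).+1.-2 ltac:(lia)).
have I1 := IH (2 * v)%N ltac:(lia).
have I2 := IH (2 * v).+1 ltac:(lia).
have -> : \sum_(i < k.+1) (1 + eps) ^+ i = 1 + (1 + eps) * \sum_(i < k) (1 + eps) ^+ i.
  rewrite big_ord_recl expr0 big_distrr; congr (_ + _); apply: eq_bigr => i _.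
  by rewrite lift0 exprS.
set S := \sum_(i < k) _ in I1 I2 *.
set A1 := \sum_(x : input n) _ in H1.
set A2 := \sum_(x : input n) _ in H2.
set B1 := \sum_(x : input n) _ in H1 I1.
set B2 := \sum_(x : input n) _ in H2 I2.
have Hq0 : 0 <= q by case/andP: Hq.
have J1 : q * B1 <= q * (2 * S) by apply: ler_wpM2l.
have J2 : q * B2 <= q * (2 * S) by apply: ler_wpM2l.
apply: (le_trans (lerD (lerD (lexx 2) (le_trans H1 J1)) (le_trans H2 J2))).
rewrite /q [X in _ <= X](_ : _ = 2 + (1 + eps) / 2 * (2 * S) + (1 + eps) / 2 * (2 * S)) //.
by field.
Qed.

Lemma sum_ones (R : realType) n (s : seq 'I_n) : \sum_(i <- s) (1 : R) = (size s)%:R.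
Proof.
elim: s => [|a s IH]; first by rewrite big_nil.
by rewrite big_cons IH /= -add1n natrD.
Qed.

Theorem mainTheorem12 (R : realType) (eps : R) (d : nat) :
  0 < eps < 1 -> (1 <= d)%N ->
  OPT_A (@binary_tree_fun d) (fun _ => 1) (fun _ => (1 + eps) / 2)
    <= 2 * \sum_(i < d.+1) (1 + eps) ^+ i.
Proof.
move=> He Hd.
set q := (1 + eps) / 2.
have Hq : forall i : 'I_(bt_n d), 0 <= q <= 1.
  by move=> _; apply/andP; split; rewrite /q; case/andP: He => *; lra.
set T := evals 1 d (@Stop (bt_n d)) Stop.
have VT : valid_strategy (@binary_tree_fun d) T.
  move=> x y H; rewrite !btf_Gl !Gl_Al; exact: evals_det H.
have Hlb : has_lbound [set r : R | exists2 T : strategy (bt_n d),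
     valid_strategy (@binary_tree_fun d) T & r = expected_cost (fun _ => 1) (fun _ => q) T].
  exists 0 => r [T' _ ->]; rewrite /expected_cost; apply: sumr_ge0 => x _.
  apply: mulr_ge0; first exact: prob_ge0.
  by apply: sumr_ge0 => *; apply: ler01.
apply: (le_trans (ge_inf Hlb _)); first by exists T.
apply: (@le_trans _ _ (2 * \sum_(i < d) (1 + eps) ^+ i)); last first.
  rewrite big_ord_recr /= ler_wpM2l // lerDl exprn_ge0 //.
  by case/andP: He => He0 _; rewrite addr_ge0 // ltW.
apply: le_trans (@Cn_bound R eps (bt_n d) d 1%N He (isT : (1 <= 1)%N)).
rewrite /expected_cost; apply: ler_sum => x _; apply: ler_wpM2l; first exact: prob_ge0.
rewrite sum_ones ler_nat; have := evals_size d 1 Stop Stop x.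
by rewrite /= maxnn addn0.
Qed.
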